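(* Let $f=\frac1{1-X}\in GF(2)[[X]]$ and for $h\in GF(2)[[X]]$ let $\alpha[h]:g\mapsto h+g$. Let $N$ be the group (under composition) generated by $\{\alpha[sf^m]\mid s\in GF(2),\ m\in\mathbb{Z}\}$. Then $N\cong\bigoplus_{\mathbb{Z}}GF^+(2)$.
   Context: $\bigoplus_{\mathbb{Z}}GF^+(2)$ denotes the group of functions $\mathfrak{r}:\mathbb{Z}\to GF(2)$ that are nonzero at only finitely many integers, under pointwise addition. *)

(* Defs.v *)
From mathcomp Require Import all_boot all_order all_algebra zify.
From Stdlib Require Import FunctionalExtensionality.
Set Implicit Arguments. Unset Strict Implicit. Unset Printing Implicit Defensive.
Import GRing.Theory Num.Theory.
Local Open Scope ring_scope.

Definition ps := nat -> 'F_2.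

Definition ps_add (a b : ps) : ps := fun n => a n + b n.
Definition ps_scale (s : 'F_2) (a : ps) : ps := fun n => s * a n.
Definition ps_mul (a b : ps) : ps :=
  fun n => \sum_(i < n.+1) a i * b (n - i)%N.
Definition ps_one : ps := fun n => (n == 0%N)%:R.
Definition ps_X : ps := fun n => (n == 1%N)%:R.
Definition ps_pow (a : ps) (k : nat) : ps := iter k (ps_mul a) ps_one.

Definition one_minus_X : ps := fun n => ps_one n - ps_X n.
(* f = 1/(1-X) = sum_k X^k : the series with all coefficients 1 *)
Definition f_ps : ps := fun _ => 1.

Lemma f_ps_inv : ps_mul f_ps one_minus_X = ps_one.
Proof.
rewrite /ps_mul /f_ps /one_minus_X /ps_one /ps_X.
apply: functional_extensionality => n.
case: n => [|n]; first by rewrite big_ord1 /= subr0 mul1r.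
rewrite big_ord_recr /= subnn /= subr0 mul1r.
case: n => [|n]; first by rewrite big_ord1 /= mul1r sub0r addNr.
rewrite big_ord_recr /= subSnn /= sub0r mul1r.
rewrite big1 ?add0r ?addNr //.
move=> i _; rewrite mul1r; have Hi := ltn_ord i.
have -> : ((n.+2 - i)%N == 0%N) = false by apply/eqP; lia.
have -> : ((n.+2 - i)%N == 1%N) = false by apply/eqP; lia.
by rewrite subrr.
Qed.

(* integer powers f^m : f^m for m >= 0, (f^{-1})^{-m} = (1-X)^{-m} for m < 0 *)
Definition f_pow (m : int) : ps :=
  match m with
  | Posz k => ps_pow f_ps k
  | Negz k => ps_pow one_minus_X k.+1
  end.

Definition alpha (h : ps) : ps -> ps := fun g => ps_add h g.

Inductive inN : (ps -> ps) -> Prop :=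
  | inN_gen (s : 'F_2) (m : int) : inN (alpha (ps_scale s (f_pow m)))
  | inN_id : inN id
  | inN_comp g h : inN g -> inN h -> inN (g \o h)
  | inN_inv g h : inN g -> (forall x, g (h x) = x) -> (forall x, h (g x) = x) ->
      inN h.

(* (+)_Z GF^+(2) : finitely supported r : int -> 'F_2, pointwise addition *)
Definition fin_supp (r : int -> 'F_2) : Prop :=
  exists s : seq int, forall z, z \notin s -> r z = 0.

(* A group isomorphism phi : N -> (+)_Z GF^+(2). Elements of N are compared
   as functions (extensional equality). *)
Definition N_iso_sum (phi : (ps -> ps) -> (int -> 'F_2)) : Prop :=
  [/\ (forall g, inN g -> fin_supp (phi g)),
      (forall g h, inN g -> inN h ->
          phi (g \o h) = (fun z => phi g z + phi h z)),
      (forall g h, inN g -> inN h -> phi g = phi h -> g = h)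
    & (forall r, fin_supp r -> exists2 g, inN g & phi g = r)].

(* Main.v *)
Require Import Defs.
From mathcomp Require Import all_boot all_order all_algebra.
From mathcomp Require Import zify ring.
From Stdlib Require Import FunctionalExtensionality ClassicalEpsilon.
Set Implicit Arguments. Unset Strict Implicit. Unset Printing Implicit Defensive.
Import GRing.Theory Num.Theory.
Local Open Scope ring_scope.

Lemma F2_cases (x : 'F_2) : x = 0 \/ x = 1.
Proof. case: x => [[|[|n]] H] //; [left|right]; exact: val_inj. Qed.
Lemma F2_11 : (1 + 1 : 'F_2) = 0. Proof. by apply: val_inj. Qed.
Lemma F2_N1 : (- 1 : 'F_2) = 1. Proof. by apply: val_inj. Qed.
Lemma F2_10 : (1 : 'F_2) != 0. Proof. by apply/eqP => /(congr1 val). Qed.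
Lemma oppF2 (x : 'F_2) : - x = x.
Proof. by case: (F2_cases x) => ->; rewrite ?oppr0 ?F2_N1. Qed.
Lemma addF2_self (x : 'F_2) : x + x = 0.
Proof. by case: (F2_cases x) => ->; rewrite ?addr0 ?F2_11. Qed.
Lemma natF2 n : (n%:R : 'F_2) = (odd n)%:R.
Proof.
elim: n => // n IH; rewrite -[n.+1]addn1 natrD IH oddD /=.
by case: (odd n) => //=; apply: val_inj.
Qed.
Lemma boolF2 (a b : bool) : ((a (+) b)%:R : 'F_2) = a%:R + b%:R.
Proof. by case: a; case: b => //=; apply: val_inj. Qed.
Lemma boolF2_inj (a b : bool) : (a%:R : 'F_2) = b%:R -> a = b.
Proof.
case: a; case: b => //= /eqP; rewrite ?F2_10 //.
all: by rewrite ?(eq_sym 0) (negbTE F2_10).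
Qed.

Definition Dop (a : ps) : ps := fun n => if n is n'.+1 then a n - a n' else a 0%N.
Definition Sop (a : ps) : ps := fun n => \sum_(i < n.+1) a i.
Definition P (j : nat) : ps := iter j Dop ps_one.
Definition lin (s : seq int) : ps := fun n => \sum_(z <- s) f_pow z n.

Lemma mul_omX a : ps_mul one_minus_X a = Dop a.
Proof.
apply: functional_extensionality => n; rewrite /ps_mul /one_minus_X /ps_one /ps_X.
case: n => [|n]; first by rewrite big_ord1 /= subr0 mul1r.
rewrite big_ord_recl /= subr0 mul1r subn0 big_ord_recl /= sub0r subSS subn0.
rewrite big1 ?addr0; first by rewrite mulN1r.
by move=> i _; rewrite /bump /= subrr mul0r.
Qed.

Lemma mul_f a : ps_mul f_ps a = Sop a.
Proof.
apply: functional_extensionality => n; rewrite /ps_mul /Sop /f_ps.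
rewrite [RHS](reindex_inj rev_ord_inj) /=; apply: eq_bigr => i _.
by rewrite mul1r subSS.
Qed.

Lemma DS a : Dop (Sop a) = a.
Proof.
apply: functional_extensionality => n; rewrite /Dop /Sop.
case: n => [|n]; first by rewrite big_ord1.
rewrite big_ord_recr /=; ring.
Qed.

Lemma f_pow_pos k : f_pow (Posz k) = iter k Sop ps_one.
Proof.
by rewrite /= /ps_pow (_ : ps_mul f_ps = Sop) //; apply: functional_extensionality; apply: mul_f.
Qed.

Lemma f_pow_neg k : f_pow (Negz k) = P k.+1.
Proof.
by rewrite /= /ps_pow /P (_ : ps_mul one_minus_X = Dop) //; apply: functional_extensionality; apply: mul_omX.
Qed.

Lemma Df m : Dop (f_pow m) = f_pow (m - 1).
Proof.
case: m => [[|k]|k].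
- by rewrite (_ : (Posz 0 - 1 = Negz 0)%R); [rewrite f_pow_neg | lia].
- rewrite (_ : (Posz k.+1 - 1 = Posz k)%R); last by lia.
  by rewrite !f_pow_pos iterS DS.
- rewrite (_ : (Negz k - 1 = Negz k.+1)%R); last by lia.
  by rewrite !f_pow_neg /P iterS.
Qed.

Lemma D_lin s : Dop (lin s) = lin (map (fun z => z - 1) s).
Proof.
apply: functional_extensionality => n; rewrite /lin big_map.
under [RHS]eq_bigr do rewrite -Df.
case: n => [|n] //=; by rewrite sumrB.
Qed.

Lemma iter_lin K s : iter K Dop (lin s) = lin (map (fun z => z - K%:Z) s).
Proof.
elim: K => [|K IH] /=.
  by congr lin; rewrite -[LHS]map_id; apply: eq_map => z; lia.
rewrite IH D_lin -map_comp; congr lin; apply: eq_map => z /=; lia.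
Qed.

Lemma iter_zero K : iter K Dop (fun _ => 0) = (fun _ => 0).
Proof.
elim: K => // K IH; rewrite iterS IH; apply: functional_extensionality => n.
by case: n => //= n; rewrite subrr.
Qed.

Lemma P_hi j n : (j < n)%N -> P j n = 0.
Proof.
elim: j n => [|j IH] n h; first by rewrite /P /= /ps_one; case: n h.
rewrite /P iterS -/(P j); case: n h => [|n] h //=.
by rewrite !IH ?subrr //; lia.
Qed.

Lemma P_diag j : P j j = 1.
Proof.
elim: j => [|j IH]; first by [].
by rewrite /P iterS -/(P j) /= IH P_hi // sub0r F2_N1.
Qed.

Lemma seq_max (t : seq nat) : t != [::] -> exists2 M, M \in t & forall j, j \in t -> (j <= M)%N.
Proof.
elim: t => // a t IH _; case: t IH => [|b t] IH.
  by exists a; rewrite ?mem_seq1 // => j; rewrite mem_seq1 => /eqP ->.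
have [M HM HMax] := IH isT.
case: (leqP a M) => h.
  exists M; first by rewrite in_cons HM orbT.
  by move=> j; rewrite in_cons => /orP [/eqP ->|/HMax].
exists a; first by rewrite in_cons eqxx.
move=> j; rewrite in_cons => /orP [/eqP ->|/HMax] //; lia.
Qed.

Lemma sum_split (F : nat -> 'F_2) M (t : seq nat) :
  \sum_(j <- t) F j = (count_mem M t)%:R * F M + \sum_(j <- [seq j <- t | j != M]) F j.
Proof.
elim: t => [|a t IH]; first by rewrite !big_nil mul0r addr0.
rewrite big_cons IH /=; case: (eqVneq a M) => [->|ne] /=.
  by rewrite natrD mulrDl mul1r addrA.
by rewrite add0n big_cons addrCA.
Qed.

Lemma nat_indep (t : seq nat) : (forall n, \sum_(j <- t) P j n = 0) ->
  forall j, ~~ odd (count_mem j t).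
Proof.
move: {2}(size t) (leqnn (size t)) => k; elim: k t => [|k IH] t Hs H j.
  by case: t Hs H.
case: (eqVneq t [::]) => [-> //|tne].
have [M HM HMax] := seq_max tne.
have cM : ~~ odd (count_mem M t).
  have := H M; rewrite (sum_split _ M) P_diag mulr1.
  rewrite big_seq big1 ?addr0; last first.
    move=> i; rewrite mem_filter => /andP [ne ht]; apply: P_hi.
    by have := HMax _ ht; rewrite leq_eqVlt (negbTE ne).
  by rewrite natF2 => h; apply/negP => ho; move: h; rewrite ho; apply/eqP; exact: F2_10.
have c0 : ((count_mem M t)%:R : 'F_2) = 0 by rewrite natF2 (negbTE cM).
set t' := [seq i <- t | i != M].
have H' : forall n, \sum_(i <- t') P i n = 0.
  by move=> n; have := H n; rewrite (sum_split _ M) c0 mul0r add0r.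
have Hs' : (size t' <= k)%N.
  rewrite size_filter.
  have h1 := count_predC (pred1 M) t.
  have h2 : (0 < count_mem M t)%N by rewrite -has_count has_pred1.
  have -> : count (fun i => i != M) t = count (predC (pred1 M)) t by apply: eq_count.
  move: Hs h2; rewrite -h1; move: (count_mem M t) (count _ t) => a b; lia.
case: (eqVneq j M) => [-> //|ne].
have := IH t' Hs' H' j.
rewrite count_filter (@eq_count _ _ (pred1 j)) // => x /=.
by case: (eqVneq x j) => [->|] //=; rewrite ne.
Qed.

Lemma bound (s : seq int) : exists K : nat, forall z, z \in s -> z < K%:Z.
Proof.
elim: s => [|a s [K HK]]; first by exists 0%N.
exists (maxn K (absz a).+1) => z; rewrite in_cons => /orP [/eqP ->|/HK]; lia.
Qed.

Lemma fneg w : w < 0 -> f_pow w = P (absz w).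
Proof. by case: w => // k _; rewrite f_pow_neg. Qed.

Lemma indep (s : seq int) : lin s = (fun _ => 0) -> forall z, ~~ odd (count_mem z s).
Proof.
move=> H z.
have [K HK] := bound s.
have H1 := congr1 (iter K Dop) H.
rewrite iter_lin iter_zero in H1.
pose g z := absz (z - K%:Z).
have H2 : forall n, \sum_(j <- map g s) P j n = 0.
  move=> n; have := congr1 (fun f => f n) H1; rewrite /lin /= big_map => E.
  rewrite big_map; apply: (etrans _ E); rewrite big_seq [RHS]big_seq; apply: eq_bigr => w hw; rewrite fneg //.
  by have := HK w hw; lia.
case: (boolP (z \in s)) => hz; last by rewrite (count_memPn hz).
have := nat_indep H2 (g z); rewrite count_map.
rewrite (@eq_in_count _ _ (pred1 z)) // => w hw /=.
have := HK w hw; have := HK z hz; rewrite /g => h1 h2.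
by apply/eqP/eqP => [|->] //; lia.
Qed.

Lemma lin_cat s t : lin (s ++ t) = ps_add (lin s) (lin t).
Proof. by apply: functional_extensionality => n; rewrite /lin /ps_add big_cat. Qed.

Lemma even_lin s : (forall z, ~~ odd (count_mem z s)) -> lin s = (fun _ => 0).
Proof.
move: {2}(size s) (leqnn (size s)) => k; elim: k s => [|k IH] s Hs H.
  by case: s Hs H => // _ _; apply: functional_extensionality => n; rewrite /lin big_nil.
case: s Hs H => [|z s'] Hs H.
  by apply: functional_extensionality => n; rewrite /lin big_nil.
have hz : z \in s'.
  have := H z; rewrite /= eqxx /= => h.
  by apply/negPn/negP => /count_memPn h0; move: h; rewrite h0.
have pe := perm_to_rem hz.
have pe2 : perm_eq (z :: s') [:: z, z & rem z s'] by rewrite perm_cons.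
have -> : lin (z :: s') = lin (rem z s').
  apply: functional_extensionality => n; rewrite /lin (perm_big _ pe2) !big_cons.
  by rewrite /= addrA addF2_self add0r.
apply: IH.
  rewrite size_rem //. move: Hs => /= Hs. lia.
move=> w; have := H w; rewrite (permP pe2) /= !oddD.
by rewrite addbA addbb.
Qed.

Lemma lin_eq s t : (forall z, odd (count_mem z s) = odd (count_mem z t)) -> lin s = lin t.
Proof.
move=> H.
have h : lin (s ++ t) = (fun _ => 0).
  by apply: even_lin => z; rewrite count_cat oddD H addbb.
rewrite lin_cat in h; apply: functional_extensionality => n.
have := congr1 (fun f => f n) h; rewrite /ps_add => /eqP.
by rewrite addr_eq0 oppF2 => /eqP.
Qed.

Lemma lin_eq_inv s t : lin s = lin t -> forall z, odd (count_mem z s) = odd (count_mem z t).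
Proof.
move=> H z.
have h : lin (s ++ t) = (fun _ => 0).
  by rewrite lin_cat H; apply: functional_extensionality => n; rewrite /ps_add addF2_self.
have := indep h z; rewrite count_cat oddD.
by case: (odd _); case: (odd _).
Qed.

Definition istr (g : ps -> ps) (s : seq int) := forall x, g x = ps_add (lin s) x.

Lemma istr_lin g s t : istr g s -> istr g t -> lin s = lin t.
Proof.
move=> H1 H2; apply: functional_extensionality => n.
have := congr1 (fun f => f n) (H1 (fun _ => 0)); rewrite H2 /ps_add !addr0.
by move=> ->.
Qed.

Lemma inN_tr g : inN g -> exists s, istr g s.
Proof.
elim => {g} [s m | | g h _ [s1 H1] _ [s2 H2] | g h _ [s Hs] Hgh Hhg].
- case: (F2_cases s) => ->.
    exists [::] => x; congr ps_add; apply: functional_extensionality => n.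
    by rewrite /ps_scale /lin big_nil mul0r.
  exists [:: m] => x; congr ps_add; apply: functional_extensionality => n.
  by rewrite /ps_scale /lin big_seq1 mul1r.
- exists [::] => x; apply: functional_extensionality => n.
  by rewrite /ps_add /lin big_nil add0r.
- exists (s1 ++ s2) => x; rewrite /= H1 H2 lin_cat.
  by apply: functional_extensionality => n; rewrite /ps_add addrA.
- exists s => x.
  have gg : g (g x) = x.
    rewrite !Hs; apply: functional_extensionality => n.
    by rewrite /ps_add addrA addF2_self add0r.
  by rewrite -{1}gg Hhg Hs.
Qed.

Lemma tr_inN s : inN (fun x => ps_add (lin s) x).
Proof.
elim: s => [|z s IH].
  rewrite (_ : (fun x => _) = id); first exact: inN_id.
  apply: functional_extensionality => x; apply: functional_extensionality => n.
  by rewrite /ps_add /lin big_nil add0r.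
rewrite (_ : (fun x => _) = alpha (ps_scale 1 (f_pow z)) \o (fun x => ps_add (lin s) x)).
  by apply: inN_comp => //; apply: inN_gen.
apply: functional_extensionality => x; apply: functional_extensionality => n.
by rewrite /= /alpha /ps_add /ps_scale /lin big_cons mul1r addrA.
Qed.

Definition rep (g : ps -> ps) : seq int := epsilon (inhabits [::]) (fun s => istr g s).
Definition phi (g : ps -> ps) : int -> 'F_2 := fun z => (odd (count_mem z (rep g)))%:R.

Lemma rep_spec g : inN g -> istr g (rep g).
Proof. by move/inN_tr => ex; apply: (epsilon_spec (inhabits [::]) _ ex). Qed.

Theorem proposition8p9 : exists phi : (ps -> ps) -> (int -> 'F_2), N_iso_sum phi.
Proof.
exists phi; split.
- move=> g _; exists (rep g) => z hz.
  by rewrite /phi (count_memPn hz).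
- move=> g h hg hh; apply: functional_extensionality => z.
  have e : istr (g \o h) (rep g ++ rep h).
    by move=> x; rewrite /= (rep_spec hg) (rep_spec hh) lin_cat; apply: functional_extensionality => n; rewrite /ps_add addrA.
  have := lin_eq_inv (istr_lin (rep_spec (inN_comp hg hh)) e) z.
  by rewrite /phi => ->; rewrite count_cat oddD boolF2.
- move=> g h hg hh e.
  have L : lin (rep g) = lin (rep h).
    apply: lin_eq => z; apply: boolF2_inj.
    exact: (congr1 (fun f => f z) e).
  by apply: functional_extensionality => x; rewrite (rep_spec hg) (rep_spec hh) L.
- move=> r [s Hs].
  set t := [seq z <- undup s | r z != 0].
  exists (fun x => ps_add (lin t) x); first exact: tr_inN.
  have hN := tr_inN t.
  have e := istr_lin (rep_spec hN) (fun x => erefl).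
  apply: functional_extensionality => z; rewrite /phi (lin_eq_inv e z).
  have ut : uniq t by rewrite filter_uniq // undup_uniq.
  rewrite (count_uniq_mem _ ut) mem_filter mem_undup.
  case: (F2_cases (r z)) => E; rewrite E; first by rewrite eqxx.
  rewrite F2_10 /=.
  case: (boolP (z \in s)) => // hz.
  by have := Hs z hz; rewrite E => /eqP; rewrite (negbTE F2_10).
Qed.
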